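(* In the setting of the context (analytic vector field $f$ with Jacobian $A$ having distinct eigenvalues, truncation order $N_{\max}\ge 1$ with the non-resonance condition, fixed index sets $S_N$, fixed perturbation amplitude $\alpha\neq0$), let $(\phi_j,\psi_j)_{j=1}^n$ and $(\phi'_j,\psi'_j)_{j=1}^n$ be two eigenvector choices with $\theta$-factors $\theta_j$ and $\theta'_j$. If $\theta_j=\theta'_j$ for all $j\in\{1,\dots,n\}$, then for every state index $k\in\{1,\dots,n\}$, every combination order $M$ with $1\le M\le N_{\max}$ and every tuple of mode indices $(r_1,\dots,r_M)\in\{1,\dots,n\}^M$, the nonlinear participation factors computed from the two choices coincide: $p_{k,r_1\cdots r_M}=p'_{k,r_1\cdots r_M}$. That is, the nonlinear participation factors of all orders, for linear modes ($M=1$) and combination modes ($M\ge2$), are uniquely determined whenever all $\theta$-factors are uniquely determined.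
   Context: Let $f:\mathbb{R}^n\to\mathbb{R}^n$ be analytic with $f(0)=0$, and write its Taylor expansion at $0$ as $f_j(x)=\sum_{i}a_{ji}x_i+\sum_{N\ge2}\sum_{\alpha_1,\dots,\alpha_N=1}^n a_{j,\alpha_1\cdots\alpha_N}x_{\alpha_1}\cdots x_{\alpha_N}$. Let $A=(a_{ji})$ be the Jacobian at $0$, assumed to have $n$ distinct eigenvalues $\lambda_1,\dots,\lambda_n\in\mathbb{C}$. For each $i$ fix a right eigenvector $\hat\phi_i$ (column) and a left eigenvector $\hat\psi_i$ (row) of $A$ for $\lambda_i$, each of unit 2-norm, and set $c_i:=\hat\psi_i\hat\phi_i\neq0$ (non-conjugated product). An eigenvector choice is a tuple $(\phi_i,\psi_i)_{i=1}^n$ with $\phi_i=\sigma_i\hat\phi_i$, $\psi_i=\xi_i\hat\psi_i$, $\sigma_i,\xi_i\in\mathbb{C}\setminus\{0\}$; its $\theta$-factors are $\theta_i:=\psi_i\phi_i=\sigma_i\xi_ic_i$. Write $\phi_{ki}$, $\psi_{ik}$ for the $k$-th entries of $\phi_i$, $\psi_i$. Fix a truncation order $N_{\max}\ge1$ and assume non-resonance: $\lambda_{r_1}+\dots+\lambda_{r_N}-\lambda_i\neq0$ for all $2\le N\le N_{\max}$, all $i$ and all $(r_1,\dots,r_N)$. Given an eigenvector choice, define for $2\le N\le N_{\max}$ the normal-form coefficients $h^i_{r_1\cdots r_N}:=\dfrac{\sum_{j=1}^n\sum_{\alpha_1,\dots,\alpha_N=1}^n\psi_{ij}\,a_{j,\alpha_1\cdots\alpha_N}\,\phi_{\alpha_1r_1}\cdots\phi_{\alpha_Nr_N}}{\lambda_{r_1}+\dots+\lambda_{r_N}-\lambda_i}$,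 and for $N=1$ set $h^i_r:=1$ if $r=i$ and $0$ otherwise. For each $2\le N\le N_{\max}$ fix an index set $S_N\subseteq\{1,\dots,n\}^N$ (independent of the eigenvector choice; e.g. in second order the paper uses $\{(p,q):p\le q\}$). Fix a perturbation amplitude $\alpha\in\mathbb{R}\setminus\{0\}$ (initial state $\alpha e_k$). Define $\mu_{lk}:=\alpha\psi_{lk}-\sum_{N=2}^{N_{\max}}\alpha^N\sum_{(r_1,\dots,r_N)\in S_N}h^l_{r_1\cdots r_N}\psi_{r_1k}\cdots\psi_{r_Nk}$, and the nonlinear participation factor of state $k$ in the (linear if $M=1$, combination if $M\ge2$) mode $(r_1,\dots,r_M)$, $1\le M\le N_{\max}$, as $p_{k,r_1\cdots r_M}:=\sum_{i=1}^n\phi_{ki}\,h^i_{r_1\cdots r_M}\,\mu_{r_1k}\cdots\mu_{r_Mk}$ (for $M=1$ this is $p_{kr}=\phi_{kr}\mu_{rk}$). *)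

(* Defs.v *)
From HB Require Import structures.
From mathcomp Require Import all_boot all_order all_algebra.
From mathcomp Require Import reals.
From mathcomp Require Import complex.
Set Implicit Arguments. Unset Strict Implicit. Unset Printing Implicit Defensive.
Import Order.TTheory GRing.Theory Num.Theory.
Local Open Scope ring_scope.

Definition toC (R : realType) (x : R) : R[i] := (x%:C)%C.

(* Conventions: indices 1..n are 'I_n.
   [A : 'M[R]_n] is the Jacobian (first-order Taylor coefficients a_{ji} = A j i).
   [a N j al] is the real Taylor coefficient a_{j,al_1...al_N} (N >= 2),
   the multi-index being a tuple al : N.-tuple 'I_n.
   [Phi k i] = phi_{ki} (k-th entry of the right eigenvector phi_i),
   [Psi i k] = psi_{ik} (k-th entry of the left eigenvector psi_i). *)

Definition choicePhi (R : realType) (n : nat) (hphi : 'I_n -> 'cV[R[i]]_n)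
  (sigma : 'I_n -> R[i]) : 'M[R[i]]_n :=
  \matrix_(k < n, i < n) (sigma i * hphi i k 0).
Definition choicePsi (R : realType) (n : nat) (hpsi : 'I_n -> 'rV[R[i]]_n)
  (xi : 'I_n -> R[i]) : 'M[R[i]]_n :=
  \matrix_(i < n, k < n) (xi i * hpsi i 0 k).

(* theta_i := psi_i phi_i (non-conjugated product) *)
Definition theta (R : realType) (n : nat) (Phi Psi : 'M[R[i]]_n) (i : 'I_n) : R[i] :=
  \sum_(k < n) Psi i k * Phi k i.

Definition resdenom (R : realType) (n : nat) (lam : 'I_n -> R[i]) (N : nat)
  (i : 'I_n) (r : N.-tuple 'I_n) : R[i] :=
  \sum_(t < N) lam (tnth r t) - lam i.

Definition hcoef (R : realType) (n : nat) (a : forall N : nat, 'I_n -> N.-tuple 'I_n -> R)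
  (lam : 'I_n -> R[i]) (Phi Psi : 'M[R[i]]_n) (N : nat) (i : 'I_n)
  (r : N.-tuple 'I_n) : R[i] :=
  if N == 1%N then ((nth i r 0 == i)%:R)
  else (\sum_(j < n) \sum_(al : N.-tuple 'I_n)
          Psi i j * toC (a N j al) * \prod_(t < N) Phi (tnth al t) (tnth r t))
       / resdenom lam i r.

(* mu_{lk} for initial state alpha e_k *)
Definition mu (R : realType) (n : nat) (a : forall N : nat, 'I_n -> N.-tuple 'I_n -> R)
  (lam : 'I_n -> R[i]) (Phi Psi : 'M[R[i]]_n) (Nmax : nat)
  (S : forall N : nat, {set N.-tuple 'I_n}) (alpha : R) (l k : 'I_n) : R[i] :=
  toC alpha * Psi l k
  - \sum_(2 <= N < Nmax.+1) toC alpha ^+ N *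
      \sum_(r : N.-tuple 'I_n | r \in S N)
         hcoef a lam Phi Psi l r * \prod_(t < N) Psi (tnth r t) k.

Definition npf (R : realType) (n : nat) (a : forall N : nat, 'I_n -> N.-tuple 'I_n -> R)
  (lam : 'I_n -> R[i]) (Phi Psi : 'M[R[i]]_n) (Nmax : nat)
  (S : forall N : nat, {set N.-tuple 'I_n}) (alpha : R) (k : 'I_n) (M : nat)
  (r : M.-tuple 'I_n) : R[i] :=
  \sum_(i < n) Phi k i * hcoef a lam Phi Psi i r
               * \prod_(t < M) mu a lam Phi Psi Nmax S alpha (tnth r t) k.

(* Main.v *)
Require Import Defs.
From HB Require Import structures.
From mathcomp Require Import all_boot all_order all_algebra.
From mathcomp Require Import reals.
From mathcomp Require Import complex.
From mathcomp Require Import zify ring.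
Import Order.TTheory GRing.Theory Num.Theory.
Local Open Scope ring_scope.

Lemma cnz (F : fieldType) n (g : 'M[F]_n) (lam : 'I_n -> F) (ph : 'I_n -> 'cV_n) (ps : 'I_n -> 'rV_n) :
 injective lam -> (forall i, g *m ph i = lam i *: ph i) -> (forall i, ps i *m g = lam i *: ps i) ->
 (forall i, ph i != 0) -> (forall i, ps i != 0) -> forall j, ps j *m ph j != 0.
Proof.
move=> inj Hph Hps nph nps j; apply/negP => /eqP c0.
pose E i := eigenspace g (lam i).
have dx := @mxdirect_sum_eigenspace F _ n g predT lam (in2W inj).
have psE i : (ps i <= E i)%MS by apply/eigenspaceP.
have r1 i : (1 <= \rank (E i))%N.
  by apply: leq_trans (mxrankS (psE i)); rewrite rank_rV nps.
have rsum : \rank (\sum_i E i)%MS = (\sum_i \rank (E i))%N.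
  by move: dx; rewrite mxdirectE => /eqP.
have rle : (\rank (\sum_i E i)%MS <= n)%N := rank_leq_col _.
have split : (\sum_i \rank (E i) = \sum_i (\rank (E i) - 1) + n)%N.
  transitivity (\sum_i ((\rank (E i) - 1) + 1))%N.
    by apply: eq_bigr => i _; rewrite addn1 subn1 prednK.
  by rewrite big_split /= sum1_card card_ord.
have t0 : (\sum_i (\rank (E i) - 1) = 0)%N by move: rle; rewrite rsum split; lia.
have rEj : \rank (E j) = 1%N.
  have /eqP := t0; rewrite sum_nat_eq0 => /forallP /(_ j) /implyP /(_ isT).
  by move: (r1 j); lia.
have full : row_full (\sum_i E i)%MS by rewrite /row_full rsum split t0.
have Ejps : (E j <= ps j)%MS.
  have [_ <-] := mxrank_leqif_sup (psE j).
  by rewrite rEj rank_rV nps.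
have EK i : (E i <= kermx (ph j))%MS.
  have [->|nij] := eqVneq i j.
    by apply: submx_trans Ejps _; apply/sub_kermxP.
  apply/sub_kermxP.
  have HE : E i *m g = lam i *: E i by apply/eigenspaceP.
  have : (lam i - lam j) *: (E i *m ph j) = 0.
    by rewrite scalerBl scalemxAl -HE -mulmxA Hph -scalemxAr subrr.
  move/eqP; rewrite scaler_eq0 subr_eq0 => /orP [/eqP /inj /eqP|/eqP //].
  by rewrite (negbTE nij).
have : (1%:M <= kermx (ph j))%MS.
  apply: submx_trans (submx_full _ full) _.
  by apply/sumsmx_subP => i _; apply: EK.
move/sub_kermxP; rewrite mul1mx => /eqP; by rewrite (negbTE (nph j)).
Qed.

Section Scale.
Variables (R : realType) (n : nat) (a : forall N : nat, 'I_n -> N.-tuple 'I_n -> R)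
  (lam : 'I_n -> R[i]) (Phi Psi Phi' Psi' : 'M[R[i]]_n) (T : 'I_n -> R[i]).
Hypothesis nT : forall i, T i != 0.
Hypothesis HPhi : forall k i, Phi' k i = T i * Phi k i.
Hypothesis HPsi : forall i k, Psi' i k = (T i)^-1 * Psi i k.

Lemma prodT_neq0 N (r : N.-tuple 'I_n) : \prod_(t < N) T (tnth r t) != 0.
Proof. by apply/prodf_neq0 => t _; apply: nT. Qed.

Lemma hcoef_scale N i (r : N.-tuple 'I_n) :
  hcoef a lam Phi' Psi' i r
  = hcoef a lam Phi Psi i r * (\prod_(t < N) T (tnth r t)) / T i.
Proof.
rewrite /hcoef; case: eqP => [eN|_].
  subst N; rewrite big_ord1 (tnth_nth i).
  case: eqP => [->|_]; last by rewrite !mul0r.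
  by rewrite mul1r mulfV.
have -> : (\sum_(j < n) \sum_(al : N.-tuple 'I_n)
          Psi' i j * toC (a N j al) * \prod_(t < N) Phi' (tnth al t) (tnth r t))
   = (\sum_(j < n) \sum_(al : N.-tuple 'I_n)
          Psi i j * toC (a N j al) * \prod_(t < N) Phi (tnth al t) (tnth r t))
     * ((\prod_(t < N) T (tnth r t)) / T i).
  rewrite mulr_suml; apply: eq_bigr => j _; rewrite mulr_suml; apply: eq_bigr => al _.
  rewrite HPsi; under eq_bigr do rewrite HPhi.
  rewrite big_split /=; ring.
ring.
Qed.

Variables (Nmax : nat) (S : forall N : nat, {set N.-tuple 'I_n}) (alpha : R).

Lemma mu_scale l k :
  mu a lam Phi' Psi' Nmax S alpha l k = (T l)^-1 * mu a lam Phi Psi Nmax S alpha l k.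
Proof.
rewrite /mu (HPsi l k) mulrBr; congr (_ - _); first ring.
rewrite mulr_sumr; apply: eq_bigr => N _; rewrite mulrCA; congr (_ * _).
rewrite mulr_sumr; apply: eq_bigr => r _; rewrite hcoef_scale.
have -> : \prod_(t < N) Psi' (tnth r t) k = \prod_(t < N) ((T (tnth r t))^-1 * Psi (tnth r t) k)
  by apply: eq_bigr => t _; apply: HPsi.
rewrite big_split /= prodfV.
have := @prodT_neq0 _ r; have := nT l.
move: (\prod_(t < N) T (tnth r t)) => P; move: (T l) => Tl nTl nP.
field; by rewrite nTl nP.
Qed.

Lemma npf_scale k M (r : M.-tuple 'I_n) :
  npf a lam Phi' Psi' Nmax S alpha k r = npf a lam Phi Psi Nmax S alpha k r.
Proof.
rewrite /npf; apply: eq_bigr => i _; rewrite HPhi hcoef_scale.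
have -> : \prod_(t < M) mu a lam Phi' Psi' Nmax S alpha (tnth r t) k = \prod_(t < M) ((T (tnth r t))^-1 * mu a lam Phi Psi Nmax S alpha (tnth r t) k)
  by apply: eq_bigr => t _; apply: mu_scale.
rewrite big_split /= prodfV.
have := @prodT_neq0 _ r; have := nT i.
move: (\prod_(t < M) T (tnth r t)) => P; move: (T i) => Ti nTi nP.
field; by rewrite nTi nP.
Qed.
End Scale.

Theorem theorem2 (R : realType) (n : nat)
  (A : 'M[R]_n) (a : forall N : nat, 'I_n -> N.-tuple 'I_n -> R)
  (lam : 'I_n -> R[i])
  (hphi : 'I_n -> 'cV[R[i]]_n) (hpsi : 'I_n -> 'rV[R[i]]_n)
  (Nmax : nat) (S : forall N : nat, {set N.-tuple 'I_n}) (alpha : R)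
  (sigma xi sigma' xi' : 'I_n -> R[i]) :
  (* distinct eigenvalues, with right/left eigenvectors of unit 2-norm *)
  injective lam ->
  (forall i, map_mx (@toC R) A *m hphi i = lam i *: hphi i) ->
  (forall i, hpsi i *m map_mx (@toC R) A = lam i *: hpsi i) ->
  (forall i, \sum_(k < n) `|hphi i k 0| ^+ 2 = 1) ->
  (forall i, \sum_(k < n) `|hpsi i 0 k| ^+ 2 = 1) ->
  (* truncation order and non-resonance *)
  (1 <= Nmax)%N ->
  (forall N : nat, (2 <= N <= Nmax)%N ->
     forall (i : 'I_n) (r : N.-tuple 'I_n), resdenom lam i r != 0) ->
  alpha != 0 ->
  (* two eigenvector choices *)
  (forall i, sigma i != 0) -> (forall i, xi i != 0) ->
  (forall i, sigma' i != 0) -> (forall i, xi' i != 0) ->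
  (* equal theta-factors *)
  (forall j, theta (choicePhi hphi sigma) (choicePsi hpsi xi) j
             = theta (choicePhi hphi sigma') (choicePsi hpsi xi') j) ->
  forall (k : 'I_n) (M : nat), (1 <= M <= Nmax)%N ->
  forall r : M.-tuple 'I_n,
    npf a lam (choicePhi hphi sigma) (choicePsi hpsi xi) Nmax S alpha k r
    = npf a lam (choicePhi hphi sigma') (choicePsi hpsi xi') Nmax S alpha k r.
Proof.
move=> inj Hph Hps nphi npsi _ _ _ nsg nxi nsg' nxi' Hth k M _ r.
have nz0 (m p : nat) (v : 'M[R[i]]_(m, p)) (x0 : 'I_p) (Hn : \sum_(k < m) `|v k x0| ^+ 2 = 1) :
   v != 0.
  apply/eqP => v0; move: Hn; rewrite v0 big1 => [/eqP|k0 _]; last by rewrite mxE normr0 expr0n.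
  by rewrite eq_sym oner_eq0.
have nphi0 i : hphi i != 0 by apply: nz0 (nphi i).
have npsi0 i : hpsi i != 0.
  have := nz0 _ _ (hpsi i)^T 0; rewrite trmx_eq0; apply.
  by under eq_bigr do rewrite mxE; apply: npsi.
pose c j := \sum_(k < n) hpsi j 0 k * hphi j k 0.
have cnz0 j : c j != 0.
  apply/eqP => c0; apply: (negP (@cnz _ _ _ _ _ _ inj Hph Hps nphi0 npsi0 j)).
  by apply/eqP/matrixP => x y; rewrite !ord1 !mxE.
have thE (sg x : 'I_n -> R[i]) j :
    theta (choicePhi hphi sg) (choicePsi hpsi x) j = sg j * x j * c j.
  rewrite /theta /c mulr_sumr; apply: eq_bigr => k0 _; rewrite !mxE; ring.
have Hxi j : xi' j = sigma j * xi j / sigma' j.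
  have := Hth j; rewrite !thE => /(mulIf (cnz0 j)) ->.
  by field; rewrite nsg'.
pose T j := sigma' j / sigma j.
have nT j : T j != 0 by rewrite /T mulf_neq0 ?invr_eq0.
symmetry; apply: (@npf_scale _ _ _ _ _ _ _ _ T) => //.
  by move=> k0 i; rewrite !mxE /T; field; rewrite nsg.
move=> i k0; rewrite !mxE Hxi /T; field; by rewrite nsg nsg'.
Qed.
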